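(* Let $M\in\mathbb{R}^{m\times n}$ with $m\le n$ and $\operatorname{rank}(M)=r$, and let $\delta\in(0,1)$. Suppose Algorithm MC-NUS (described in the context) is run on $M$ with target rank $r$, the uniform column sampling distribution $p_1=\dots=p_n=1/n$, $d$ sampled columns and $s$ sampled entries per remaining column, where $d\ge 7\mu(r)r\ln(2r/\delta)$ and $s\ge 7\mu(r)r\ln(2rn/\delta)$. Then with probability at least $1-\delta$, the output satisfies $\hat M=M$.
   Context: Notation: for a matrix $B$, $B_{(i)}$ is its $i$-th row and $B^{(j)}$ its $j$-th column; for a (multi)set $\mathcal{O}$ of row indices, $\mathbf{x}_{\mathcal{O}}$ is the vector of entries of $\mathbf{x}$ indexed by $\mathcal{O}$ and $B_{\mathcal{O}}$ is the matrix of rows of $B$ indexed by $\mathcal{O}$ (with repetitions). Write $M=[\mathbf{m}_1,\dots,\mathbf{m}_n]$. Algorithm MC-NUS (inputs: target rank $r>0$, integers $d\ge r$, $s>0$, distribution $\{p_i\}_{i=1}^n$ with $p_i>0$): (1) For $j=1,\dots,d$, independently sample $i_j\in[n]$ with $\Pr[i_j=i]=p_i$; set $\hat{\mathbf{m}}_{i_j}=\mathbf{m}_{i_j}$ and $A^{(j)}=\mathbf{m}_{i_j}/\sqrt{d\,p_{i_j}}$, giving $A\in\mathbb{R}^{m\times d}$. (2) Set $\hat r=\min(r,\operatorname{rank}(A))$ and let $\hat U\in\mathbb{R}^{m\times\hat r}$ consist of the top-$\hat r$ left singular vectors of $A$. (3) For each remaining column $\mathbf{m}_i$, sample a multiset $\mathcal{O}_i$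 of $s$ indices uniformly at random from $[m]$ with replacement, observe $\mathbf{m}_{i,\mathcal{O}_i}$, and set $\hat{\mathbf{m}}_i=\hat U(\hat U_{\mathcal{O}_i}^T\hat U_{\mathcal{O}_i})^{-1}\hat U_{\mathcal{O}_i}^T\mathbf{m}_{i,\mathcal{O}_i}$. Output $\hat M=[\hat{\mathbf{m}}_1,\dots,\hat{\mathbf{m}}_n]$. Incoherence: with $\bar U\in\mathbb{R}^{m\times r}$, $\bar V\in\mathbb{R}^{n\times r}$ the top-$r$ left and right singular vectors of $M$, $\mu(r)=\max\left(\max_{i\in[m]}\frac{m}{r}\|\bar U_{(i)}\|_2^2,\ \max_{i\in[n]}\frac{n}{r}\|\bar V_{(i)}\|_2^2\right)$. *)

(* Defs.v *)
From HB Require Import structures.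
From mathcomp Require Import all_boot all_order all_algebra.
From mathcomp Require Import reals exp.
Set Implicit Arguments. Unset Strict Implicit. Unset Printing Implicit Defensive.
Import Order.TTheory GRing.Theory Num.Theory.
Local Open Scope ring_scope.

Definition is_svd (R : realType) (p q : nat) (A : 'M[R]_(p, q))
  (U : 'M[R]_p) (S : 'M[R]_(p, q)) (V : 'M[R]_q) : Prop :=
  [/\ U^T *m U = 1%:M, V^T *m V = 1%:M,
      (forall (i : 'I_p) (j : 'I_q), (i : nat) <> j -> S i j = 0) /\
      (forall (i : 'I_p) (j : 'I_q), 0 <= S i j),
      (forall (i1 i2 : 'I_p) (j1 j2 : 'I_q),
          (i1 : nat) = j1 -> (i2 : nat) = j2 -> (i1 <= i2)%N -> S i2 j2 <= S i1 j1)
    & A = U *m S *m V^T].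

Definition first_cols (R : realType) (p k : nat) (U : 'M[R]_p) (W : 'M[R]_(p, k)) : Prop :=
  (k <= p)%N /\ forall (i : 'I_p) (j : 'I_k) (j' : 'I_p), (j' : nat) = j -> W i j = U i j'.

Definition top_left_sv (R : realType) (p q : nat) (A : 'M[R]_(p, q)) (k : nat)
  (W : 'M[R]_(p, k)) : Prop :=
  exists U S V, is_svd A U S V /\ first_cols U W.

Definition incoherence (R : realType) (m n : nat) (M : 'M[R]_(m, n)) (r : nat) (mu : R) : Prop :=
  exists U S V (Ub : 'M[R]_(m, r)) (Vb : 'M[R]_(n, r)),
    [/\ is_svd M U S V, first_cols U Ub, first_cols V Vb &
      mu = Num.max
             (\big[Num.max/0]_(i < m) (m%:R / r%:R * \sum_(j < r) Ub i j ^+ 2))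
             (\big[Num.max/0]_(i < n) (n%:R / r%:R * \sum_(j < r) Vb i j ^+ 2))].

(* Randomness of MC-NUS: the d sampled column indices i_1..i_d, and for every
   column i a multiset O_i of s row indices (given as an s-tuple of indices);
   O_i is only used for the columns that were not sampled. *)
Definition mcnus_omega (m n d s : nat) : finType :=
  ({ffun 'I_d -> 'I_n} * {ffun 'I_n -> {ffun 'I_s -> 'I_m}})%type.

Definition sampledA (R : realType) (m n : nat) (M : 'M[R]_(m, n)) (d : nat)
  (p : 'I_n -> R) (cols : {ffun 'I_d -> 'I_n}) : 'M[R]_(m, d) :=
  \matrix_(a < m, j < d) (M a (cols j) / Num.sqrt (d%:R * p (cols j))).

Definition is_sampled (n d : nat) (cols : {ffun 'I_d -> 'I_n}) (i : 'I_n) : bool :=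
  [exists j, cols j == i].

Definition hatr (R : realType) (m n : nat) (M : 'M[R]_(m, n)) (r d : nat)
  (p : 'I_n -> R) (cols : {ffun 'I_d -> 'I_n}) : nat :=
  minn r (\rank (sampledA M p cols)).

Definition U_O (R : realType) (m n s k : nat) (U : 'M[R]_(m, k))
  (O : {ffun 'I_n -> {ffun 'I_s -> 'I_m}}) (i : 'I_n) : 'M[R]_(s, k) :=
  \matrix_(t < s, c < k) U (O i t) c.

Definition mcnus_output (R : realType) (m n : nat) (M : 'M[R]_(m, n)) (d s k : nat)
  (cols : {ffun 'I_d -> 'I_n}) (O : {ffun 'I_n -> {ffun 'I_s -> 'I_m}})
  (U : 'M[R]_(m, k)) : 'M[R]_(m, n) :=
  \matrix_(a < m, i < n)
    (if is_sampled cols i then M a i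
     else (U *m invmx ((U_O U O i)^T *m U_O U O i) *m (U_O U O i)^T
             *m (\col_(t < s) M (O i t) i)) a ord0).

(* Success event: for (every valid choice of) U, the algorithm is well defined
   (all U_O^T U_O invertible) and outputs exactly M. *)
Definition mcnus_success (R : realType) (m n : nat) (M : 'M[R]_(m, n)) (r d s : nat)
  (p : 'I_n -> R) (w : mcnus_omega m n d s) : Prop :=
  forall U : 'M[R]_(m, hatr M r p w.1),
    top_left_sv (sampledA M p w.1) U ->
    (forall i : 'I_n, ~~ is_sampled w.1 i ->
        (U_O U w.2 i)^T *m U_O U w.2 i \in unitmx)
    /\ mcnus_output M w.1 w.2 U = M.

(* Main.v *)
Require Import Defs.
From HB Require Import structures.
From mathcomp Require Import all_boot all_order all_algebra.
From mathcomp Require Import reals exp.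
From mathcomp Require Import ring lra zify.
Import Order.TTheory GRing.Theory Num.Theory.
Local Open Scope ring_scope.
Set Implicit Arguments. Unset Strict Implicit. Unset Printing Implicit Defensive.
Lemma mulmx_tr_eq0 (R : realType) p q (A : 'M[R]_(p,q)) : A *m A^T = 0 -> A = 0.
Proof.
move=> H; apply/matrixP=> i j; rewrite mxE.
have := congr1 (fun M : 'M_p => M i i) H; rewrite !mxE => /eqP.
rewrite psumr_eq0; last by move=> k _; rewrite mxE -expr2 sqr_ge0.
move/allP => /(_ j (mem_index_enum _)); rewrite mxE -expr2 sqrf_eq0 => /eqP//.
Qed.

Lemma gram_unit (R : realType) s r (X : 'M[R]_(s, r)) : \rank X = r -> X^T *m X \in unitmx.
Proof.
move=> HX; rewrite -row_free_unit; apply: inj_row_free => v Hv.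
have H0 : (v *m X^T) *m (v *m X^T)^T = 0.
  by rewrite trmx_mul trmxK mulmxA -(mulmxA v) Hv mul0mx.
have /eqP : v *m X^T = 0 by exact: mulmx_tr_eq0.
rewrite mulmx_free_eq0 => [/eqP //|]. by rewrite /row_free mxrank_tr HX.
Qed.

Definition fcons (T : finType) s (i : T) (g : {ffun 'I_s -> T}) : {ffun 'I_s.+1 -> T} :=
  [ffun j => if unlift ord0 j is Some j' then g j' else i].

Lemma sum_ffunS (R : realType) (T : finType) s (F : {ffun 'I_s.+1 -> T} -> R) :
  \sum_(f : {ffun 'I_s.+1 -> T}) F f = \sum_(i : T) \sum_(g : {ffun 'I_s -> T}) F (fcons i g).
Proof.
rewrite pair_big /=.
rewrite (reindex (fun p : T * {ffun 'I_s -> T} => fcons p.1 p.2)) //.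
exists (fun f : {ffun 'I_s.+1 -> T} => (f ord0, [ffun j => f (lift ord0 j)])).
  move=> [i g] _ /=; congr pair; first by rewrite /fcons ffunE unlift_none.
  by apply/ffunP=> j; rewrite !ffunE liftK.
move=> f _ /=; apply/ffunP=> j; rewrite /fcons !ffunE.
by case: unliftP => [j'|] ->; rewrite ?ffunE.
Qed.

Definition rowsX (R : realType) N r s (X : 'M[R]_(N, r)) (t : {ffun 'I_s -> 'I_N}) : 'M[R]_(s, r) :=
  \matrix_(j, k) X (t j) k.

Lemma rowsX_cons (R : realType) N r s (X : 'M[R]_(N, r)) i (g : {ffun 'I_s -> 'I_N}) :
  rowsX X (fcons i g) = col_mx (row i X) (rowsX X g).
Proof.
apply/matrixP=> j k; rewrite !mxE /fcons ffunE.
case: unliftP => [j'|] ->.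
  have -> : lift ord0 j' = rshift 1 j' by apply: val_inj.
  by have := col_mxEd (row i X) (rowsX X g) j' k; rewrite mxE => ->; rewrite mxE.
have -> : (ord0 : 'I_s.+1) = lshift s (ord0 : 'I_1) by apply: val_inj.
by have := col_mxEu (row i X) (rowsX X g) ord0 k; rewrite mxE => ->; rewrite mxE.
Qed.

Lemma rank_cons (R : realType) N r s (X : 'M[R]_(N, r)) (W : 'M[R]_r) i (g : {ffun 'I_s -> 'I_N}) :
  \rank (W + rowsX X (fcons i g))%MS = \rank ((W + row i X) + rowsX X g)%MS.
Proof.
rewrite rowsX_cons -addsmxA; apply: eqmx_rank; apply/eqmxP.
apply: adds_eqmx; first exact: eqmx_refl.
exact: (eqmx_sym (addsmxE (row i X) (rowsX X g))).
Qed.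

Lemma rank_nil (R : realType) N r (X : 'M[R]_(N, r)) (W : 'M[R]_r) (g : {ffun 'I_0 -> 'I_N}) :
  \rank (W + rowsX X g)%MS = \rank W.
Proof. by rewrite (flatmx0 (rowsX X g)) addsmx0. Qed.

Lemma sqnorm_ge0 (R : realType) r (x : 'rV[R]_r) : 0 <= (x *m x^T) 0 0.
Proof. by rewrite mxE; apply: sumr_ge0 => j _; rewrite mxE -expr2 sqr_ge0. Qed.

Lemma leave (R : realType) N r (X : 'M[R]_(N, r)) (W : 'M[R]_r) (c : R) :
  X^T *m X = 1%:M -> (forall i, \sum_k X i k ^+ 2 <= c) ->
  (r - \rank W)%N%:R <= c * \sum_i (~~ (row i X <= W)%MS)%:R.
Proof.
move=> HX Hc.
set k := \rank W.
pose Z := row_base W.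
have HZ : \rank Z = k by rewrite eq_row_base.
have Weq : forall x : 'rV_r, (x <= W)%MS -> exists y, x = y *m Z.
  by move=> x; rewrite -(eq_row_base W) => /submxP.
clearbody Z.
pose G := Z *m Z^T.
have HG : G \in unitmx by have := gram_unit (X := Z^T); rewrite trmxK mxrank_tr HZ; apply.
pose P := Z^T *m invmx G *m Z.
have PT : P^T = P.
  by rewrite /P !trmx_mul !trmxK trmx_inv /G trmx_mul trmxK mulmxA.
have PP : P *m P = P.
  rewrite /P.
  have -> : Z^T *m invmx G *m Z *m (Z^T *m invmx G *m Z) = Z^T *m invmx G *m (Z *m Z^T) *m invmx G *m Z by rewrite !mulmxA.
  by rewrite -/G -(mulmxA _ G) mulmxV // mulmx1.
have q_in : forall x : 'rV_r, (x <= W)%MS -> x *m P = x.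
  move=> x /Weq [y ->].
  rewrite /P !mulmxA -(mulmxA y Z) -/G -(mulmxA y G) mulmxV // mulmx1 //.
have trP : \tr P = k%:R.
  rewrite /P -mulmxA mxtrace_mulC -mulmxA -/G mulVmx // mxtrace1 //.
clearbody P.
have q_ge0 : forall x : 'rV_r, 0 <= (x *m P *m x^T) 0 0.
  move=> x; have -> : x *m P *m x^T = (x *m P) *m (x *m P)^T.
    by rewrite trmx_mul PT mulmxA -(mulmxA x P P) PP.
  exact: sqnorm_ge0.
have rowq : forall (B : 'M_r) i, (row i X *m B *m (row i X)^T) 0 0 = (X *m B *m X^T) i i.
  move=> B i; rewrite -row_mul !mxE; apply: eq_bigr => j _; rewrite !mxE //.
have sumq : \sum_i (row i X *m P *m (row i X)^T) 0 0 = k%:R.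
  under eq_bigr => i _ do rewrite rowq.
  rewrite -/(\tr _) mxtrace_mulC mulmxA HX mul1mx //.
have sumn : \sum_i (row i X *m (row i X)^T) 0 0 = r%:R.
  have rowq1 : forall i, (row i X *m (row i X)^T) 0 0 = (X *m X^T) i i.
    by move=> i; have := rowq 1%:M i; rewrite !mulmx1.
  under eq_bigr => i _ do rewrite rowq1.
  rewrite -/(\tr _) mxtrace_mulC HX mxtrace1 //.
have rn : forall i, (row i X *m (row i X)^T) 0 0 = \sum_k X i k ^+ 2.
  move=> i; rewrite mxE; apply: eq_bigr => j _; rewrite !mxE expr2 //.
rewrite natrB ?rank_leq_col // -sumn -sumq -sumrB mulr_sumr.
apply: ler_sum => i _.
case Hi : (row i X <= W)%MS => /=.
  by rewrite q_in // subrr mulr0.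
rewrite mulr1 lerBlDr; apply: (le_trans (_ : _ <= c)); first by rewrite rn Hc.
by rewrite lerDl q_ge0.
Qed.

Definition cnt (R : realType) N r s (X : 'M[R]_(N, r)) (W : 'M[R]_r) : R :=
  \sum_(t : {ffun 'I_s -> 'I_N}) (\rank (W + rowsX X t)%MS < r)%N%:R.

Lemma cnt_full (R : realType) N r s (X : 'M[R]_(N, r)) (W : 'M[R]_r) :
  \rank W = r -> cnt s X W = 0.
Proof.
move=> HW; apply: big1 => t _.
suff -> : (\rank (W + rowsX X t)%MS < r)%N = false by [].
apply/negbTE; rewrite -leqNgt -{1}HW; apply: mxrankS; exact: addsmxSl.
Qed.

Lemma count_bound (R : realType) N r (X : 'M[R]_(N, r)) (c : R) :
  X^T *m X = 1%:M -> (forall i, \sum_k X i k ^+ 2 <= c) -> 0 < c -> 1 <= c * N%:R ->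
  forall s (W : 'M_r),
  cnt s X W <= (r - \rank W)%N%:R * ((1 - (c * N%:R)^-1) ^+ s * N%:R ^+ s).
Proof.
move=> HX Hc c0 cN.
set a := 1 - (c * N%:R)^-1.
have a0 : 0 <= a.
  by rewrite /a subr_ge0 invf_le1 // (lt_le_trans ltr01 cN).
have N0 : N%:R != 0 :> R.
  apply/eqP=> N0; move: cN; rewrite N0 mulr0; lra.
elim=> [|s IH] W.
  rewrite /cnt expr0 mul1r expr0 mulr1.
  under eq_bigr => t _ do rewrite rank_nil.
  rewrite sumr_const card_ffun !card_ord expn0 mulr1n ler_nat.
  by case: ltnP => // H; rewrite subn_gt0.
have [Hfull|Hlt] := eqVneq (\rank W) r.
  by rewrite cnt_full // Hfull subnn mul0r.
have Hlt' : (\rank W < r)%N by rewrite ltn_neqAle Hlt rank_leq_col.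
set A := a ^+ s * N%:R ^+ s.
have A0 : 0 <= A by rewrite /A mulr_ge0 // exprn_ge0.
set j := (r - \rank W)%N.
have j1 : (1 <= j)%N by rewrite subn_gt0.
rewrite /cnt sum_ffunS.
under eq_bigr => i _ do under eq_bigr => g _ do rewrite rank_cons.
have step : forall i : 'I_N, cnt s X (W + row i X)%MS <= (j%:R - (~~ (row i X <= W)%MS)%:R) * A.
  move=> i; apply: le_trans (IH _) _; apply: ler_wpM2r => //.
  case Hi : (row i X <= W)%MS => /=.
    by rewrite subr0 ler_nat /j; move/addsmx_idPl: Hi => ->.
  have : (\rank W < \rank (W + row i X)%MS)%N.
    by rewrite (ltn_leqif (mxrank_leqif_sup (addsmxSl W (row i X)))) addsmx_sub submx_refl Hi.
  move=> Hr; rewrite -natrB // ler_nat /j; lia.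
apply: le_trans (ler_sum _ (fun i _ => step i)) _.
rewrite -mulr_suml sumrB sumr_const card_ord.
have Hleave := leave W HX Hc; rewrite -/j in Hleave.
have -> : j%:R * (a ^+ s.+1 * N%:R ^+ s.+1) = (j%:R * (a * N%:R)) * A by rewrite /A !exprS; ring.
apply: ler_wpM2r => //.
have -> : j%:R * (a * N%:R) = j%:R *+ N - j%:R / c.
  by rewrite /a -mulr_natr; field; rewrite N0 gt_eqF.
apply: lerB => //.
by rewrite ler_pdivrMr // mulrC.
Qed.

Definition Emx (R : realType) p k : 'M[R]_(p, k) := \matrix_(a, b) ((a : nat) == b)%:R.

Lemma sum_delta (R : realType) p (F : 'I_p -> R) (j0 : 'I_p) (j : nat) :
  (j0 : nat) = j -> \sum_(c < p) F c * ((c : nat) == j)%:R = F j0.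
Proof.
move=> <-; rewrite (bigD1 j0) //= eqxx mulr1 big1 ?addr0 // => c Hc.
have -> : ((c : nat) == j0) = false by apply/negbTE.
by rewrite mulr0.
Qed.

Lemma sum_delta_l (R : realType) p (F : 'I_p -> R) (j0 : 'I_p) (j : nat) :
  (j0 : nat) = j -> \sum_(c < p) ((c : nat) == j)%:R * F c = F j0.
Proof. by move=> H; rewrite -(sum_delta F H); apply: eq_bigr => c _; rewrite mulrC. Qed.

Lemma sum_delta_l' (R : realType) p (F : 'I_p -> R) (j0 : 'I_p) (j : nat) :
  (j0 : nat) = j -> \sum_(c < p) (j == (c : nat))%:R * F c = F j0.
Proof. by move=> H; rewrite -(sum_delta_l F H); apply: eq_bigr => c _; rewrite eq_sym. Qed.

Lemma first_cols_orth (R : realType) p k (U : 'M[R]_p) (W : 'M[R]_(p, k)) :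
  U^T *m U = 1%:M -> first_cols U W -> W = U *m Emx R p k /\ W^T *m W = 1%:M.
Proof.
move=> HU [Hkp HW].
have WE : W = U *m Emx R p k.
  apply/matrixP=> a b; rewrite !mxE.
  under eq_bigr => c _ do rewrite mxE.
  by rewrite (sum_delta _ (j0 := widen_ord Hkp b)) // (HW a b (widen_ord Hkp b)).
split=> //; rewrite WE trmx_mul -mulmxA (mulmxA U^T) HU mul1mx.
apply/matrixP=> a b; rewrite !mxE.
under eq_bigr => c _ do rewrite !mxE.
by rewrite (sum_delta_l _ (j0 := widen_ord Hkp a)) //=.
Qed.

Lemma rank_unit_l (R : realType) p q (U : 'M[R]_p) (B : 'M[R]_(p, q)) :
  U \in unitmx -> \rank (U *m B) = \rank B.
Proof.
move=> HU; rewrite -mxrank_tr trmx_mul mxrankMfree ?mxrank_tr //.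
by rewrite row_free_unit unitmx_tr.
Qed.

Lemma svd_rank (R : realType) p q (A : 'M[R]_(p, q)) U S V :
  is_svd A U S V -> \rank A = \rank S.
Proof.
case=> HU HV _ _ ->.
have [_ Uu] := mulmx1_unit HU.
have [Vtu _] := mulmx1_unit HV.
by rewrite mxrankMfree ?row_free_unit // rank_unit_l.
Qed.

Lemma svd_rows_zero (R : realType) p q (A : 'M[R]_(p, q)) U S V k :
  is_svd A U S V -> \rank A = k -> forall (i : 'I_p) (j : 'I_q), (k <= i)%N -> S i j = 0.
Proof.
move=> Hs Hk i j Hki.
have HrS : \rank S = k by rewrite -(svd_rank Hs).
case: Hs => HU HV [Hdiag Hnn] Hmono HA.
have [Hij|Hij] := eqVneq (i : nat) j; last by apply: Hdiag; apply/eqP.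
have [//|Hne] := eqVneq (S i j) 0.
exfalso.
have Hip : (i.+1 <= p)%N by [].
have Hiq : (i.+1 <= q)%N by rewrite Hij.
have pos : forall l : 'I_i.+1, 0 < S (widen_ord Hip l) (widen_ord Hiq l).
  move=> l; apply: (lt_le_trans (_ : 0 < S i j)).
    by rewrite lt_def Hne Hnn.
  apply: Hmono => //=; rewrite -ltnS; exact: ltn_ord.
pose P : 'M[R]_(i.+1, p) := \matrix_(a, b) ((a : nat) == b)%:R.
pose Q : 'M[R]_(q, i.+1) := \matrix_(a, b) ((a : nat) == b)%:R.
have HPSQ : P *m S *m Q = diag_mx (\row_l S (widen_ord Hip l) (widen_ord Hiq l)).
  apply/matrixP=> a b; rewrite !mxE.
  under eq_bigr => c _ do rewrite mxE.
  under eq_bigr => c _ do (under eq_bigr => e _ do rewrite mxE).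
  under eq_bigr => c _ do rewrite (sum_delta_l' _ (j0 := widen_ord Hip a)) // mxE.
  rewrite (sum_delta _ (j0 := widen_ord Hiq b)) //.
  have [->|Hab] := eqVneq a b; first by rewrite mulr1n.
  rewrite mulr0n; apply: Hdiag => /= Habn; move/eqP: Hab; apply.
  exact: val_inj.
have Hu : P *m S *m Q \in unitmx.
  rewrite HPSQ unitmxE det_diag unitfE; apply/prodf_neq0 => l _.
  by rewrite mxE gt_eqF ?pos.
have := mxrank_unit Hu.
move=> Hr.
have : (i.+1 <= k)%N.
  rewrite -Hr -HrS; apply: leq_trans (mxrankM_maxl _ _) _; exact: mxrankM_maxr.
by rewrite ltnNge Hki.
Qed.

Lemma svd_proj (R : realType) p q (A : 'M[R]_(p, q)) U S V k (W : 'M[R]_(p, k)) :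
  is_svd A U S V -> \rank A = k -> first_cols U W ->
  W^T *m W = 1%:M /\ W *m (W^T *m A) = A.
Proof.
move=> Hs Hk Hf.
have Hz := svd_rows_zero Hs Hk.
case: Hs => HU HV _ _ HA.
have [WE WW] := first_cols_orth HU Hf.
split=> //.
have [Hkp _] := Hf.
have ES : Emx R p k *m ((Emx R p k)^T *m S) = S.
  apply/matrixP=> a j; rewrite !mxE.
  under eq_bigr => b _ do rewrite !mxE.
  under eq_bigr => b _ do (under eq_bigr => c _ do rewrite !mxE).
  under eq_bigr => b _ do rewrite (sum_delta_l _ (j0 := widen_ord Hkp b)) //.
  have [Hak|Hak] := ltnP a k.
    by rewrite (sum_delta_l' _ (j0 := Ordinal Hak)) //=; congr (S _ _); apply: val_inj.
  rewrite Hz // big1 // => b _.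
  have -> : ((a : nat) == b) = false by apply/negbTE; rewrite neq_ltn (leq_trans (ltn_ord b) Hak) orbT.
  by rewrite mul0r.
rewrite HA WE trmx_mul.
rewrite -!mulmxA; congr (_ *m _).
rewrite !mulmxA -(mulmxA _ U^T U) HU mulmx1.
have -> : Emx R p k *m (Emx R p k)^T *m S *m V^T = (Emx R p k *m ((Emx R p k)^T *m S)) *m V^T.
  by rewrite !mulmxA.
by rewrite ES.
Qed.

Lemma is_svd_tr (R : realType) p q (A : 'M[R]_(p, q)) U S V :
  is_svd A U S V -> is_svd A^T V S^T U.
Proof.
case=> HU HV [Hd Hn] Hm HA; split=> //.
- split.
    by move=> i j H; rewrite mxE; apply: Hd => H'; apply: H.
  by move=> i j; rewrite mxE.
- move=> i1 i2 j1 j2 H1 H2 H12; rewrite !mxE; apply: Hm => //.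
  by rewrite -H1 -H2.
- by rewrite HA !trmx_mul trmxK mulmxA.
Qed.

Lemma success_det (R : realType) m n (M : 'M[R]_(m, n)) r d s (Ub : 'M[R]_(m, r))
  (Vb : 'M[R]_(n, r)) (w : mcnus_omega m n d s) :
  \rank M = r -> (0 < d)%N -> (0 < n)%N ->
  Ub^T *m Ub = 1%:M -> Ub *m (Ub^T *m M) = M -> M *m Vb *m Vb^T = M ->
  \rank (rowsX Vb w.1) = r -> (forall i, \rank (rowsX Ub (w.2 i)) = r) ->
  mcnus_success M r (fun _ => n%:R^-1) w.
Proof.
move=> HrM d0 n0 UbUb UbM MV.
case: w => cols O /= HV HO.
set A := sampledA M (fun _ => n%:R^-1) cols.
set kap := (Num.sqrt (d%:R * n%:R^-1) : R)^-1.
have kap0 : kap != 0.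
  rewrite /kap invr_eq0 gt_eqF // sqrtr_gt0 mulr_gt0 // ?invr_gt0 ltr0n //.
pose C : 'M[R]_(n, d) := \matrix_(i, j) ((cols j == i)%:R * kap).
have hA : A = M *m C.
  apply/matrixP=> a j; rewrite !mxE.
  under eq_bigr => i _ do rewrite mxE.
  rewrite (bigD1 (cols j)) //= eqxx big1 => [|i Hi]; first by rewrite addr0 mul1r.
  by rewrite eq_sym (negbTE Hi) mul0r mulr0.
have hVC : Vb^T *m C = kap *: (rowsX Vb cols)^T.
  apply/matrixP=> l j; rewrite !mxE.
  under eq_bigr => i _ do rewrite !mxE.
  rewrite (bigD1 (cols j)) //= eqxx big1 => [|i Hi]; first by rewrite addr0 mul1r mulrC.
  by rewrite eq_sym (negbTE Hi) mul0r mulr0.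
have rMV : \rank (M *m Vb) = r.
  apply/eqP; rewrite eqn_leq rank_leq_col /= -{1}HrM -{1}MV; exact: mxrankM_maxl.
have rankA : \rank A = r.
  rewrite hA -MV -mulmxA hVC -mxrank_tr trmx_mul mxrankMfree; last first.
    by rewrite /row_free mxrank_tr rMV.
  by rewrite linearZ /= trmxK mxrank_scale_nz.
have hatrE : hatr M r (fun _ => n%:R^-1) cols = r by rewrite /hatr rankA minnn.
rewrite /mcnus_success /=.
move: (hatr M r (fun _ => n%:R^-1) cols) hatrE => k Hk; subst k.
move=> U [UA [SA [VA [HsA HfA]]]].
rewrite -/A in HsA.
have [UtU UUA] := svd_proj HsA rankA HfA.
have rU : \rank U = r.
  apply/eqP; rewrite eqn_leq rank_leq_col /=.
  by have := mxrankM_maxr U^T U; rewrite UtU mxrank1.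
have AleM : (A^T <= M^T)%MS by rewrite hA trmx_mul submxMl.
have MleA : (M^T <= A^T)%MS.
  by rewrite -(geq_leqif (mxrank_leqif_sup AleM)) !mxrank_tr rankA HrM.
have [Y HY] := submxP MleA.
have UUM : U *m (U^T *m M) = M.
  have -> : M = A *m Y^T by rewrite -[M]trmxK HY trmx_mul trmxK.
  have -> : U *m (U^T *m (A *m Y^T)) = U *m (U^T *m A) *m Y^T by rewrite !mulmxA.
  by rewrite UUA.
have UleA : (U^T <= A^T)%MS.
  have AleU : (A^T <= U^T)%MS by rewrite -UUA trmx_mul submxMl.
  by rewrite -(geq_leqif (mxrank_leqif_sup AleU)) !mxrank_tr rankA rU.
have [Z HZ] := submxP UleA.
have UbU : Ub *m (Ub^T *m U) = U.
  have -> : U = A *m Z^T by rewrite -[U]trmxK HZ trmx_mul trmxK.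
  rewrite hA.
  have -> : Ub *m (Ub^T *m (M *m C *m Z^T)) = Ub *m (Ub^T *m M) *m (C *m Z^T) by rewrite !mulmxA.
  by rewrite UbM mulmxA.
set Q := Ub^T *m U.
have rQ : row_free Q.
  rewrite /row_free eqn_leq rank_leq_row /=.
  by have := mxrankM_maxr Ub Q; rewrite UbU rU.
have rowsU : forall t : {ffun 'I_s -> 'I_m}, rowsX U t = rowsX Ub t *m Q.
  move=> t; apply/matrixP=> j c; rewrite !mxE -{1}UbU mxE.
  by apply: eq_bigr => l _; rewrite !mxE.
have UO_eq : forall i, U_O U O i = rowsX U (O i).
  by move=> i; apply/matrixP=> j c; rewrite !mxE.
have rUO : forall i, \rank (U_O U O i) = r.
  by move=> i; rewrite UO_eq rowsU mxrankMfree // HO.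
split; first by move=> i _; exact: gram_unit (rUO i).
apply/matrixP=> a i; rewrite mxE.
case: ifP => // _.
set UO := U_O U O i.
have hcol : \col_(t < s) M (O i t) i = UO *m col i (U^T *m M).
  apply/matrixP=> t z; rewrite !mxE -{1}UUM mxE.
  by apply: eq_bigr => l _; rewrite !mxE.
rewrite hcol.
have -> : U *m invmx (UO^T *m UO) *m UO^T *m (UO *m col i (U^T *m M))
   = U *m (invmx (UO^T *m UO) *m (UO^T *m UO)) *m col i (U^T *m M) by rewrite !mulmxA.
rewrite mulVmx ?gram_unit ?rUO // mulmx1.
rewrite -[in RHS]UUM !mxE.
by apply: eq_bigr => l _; rewrite !mxE.
Qed.

Lemma exp_bound (R : realType) (K L : R) (x : nat) :
  1 <= K -> 1 <= L -> 7 * K * ln L <= x%:R -> (1 - K^-1) ^+ x <= L^-1.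
Proof.
move=> K1 L1 Hx.
have K0 : 0 < K by apply: lt_le_trans K1; exact: ltr01.
have L0 : 0 < L by apply: lt_le_trans L1; exact: ltr01.
have a0 : 0 <= 1 - K^-1 by rewrite subr_ge0 invf_le1.
apply: (le_trans (y := sequences.expR (- K^-1) ^+ x)).
  apply: lerXn2r; [by rewrite nnegrE | by rewrite nnegrE expR_ge0 | exact: expR_ge1Dx].
rewrite -expRM_natl -{1}(lnK (x := L)) ?posrE // -expRN ler_expR.
have lnL0 : 0 <= ln L by exact: ln_ge0.
rewrite mulrN lerN2 ler_pdivlMr //.
apply: le_trans Hx; nra.
Qed.

Lemma sum_ffun_coord (R : realType) (I T : finType) (i : I) (g : T -> R) :
  \sum_(O : {ffun I -> T}) g (O i) = #|T|%:R ^+ (#|I|.-1) * \sum_x g x.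
Proof.
pose F := fun (j : I) (x : T) => if j == i then g x else 1.
have L : \prod_j \sum_x F j x = (\sum_x g x) * #|T|%:R ^+ #|I|.-1.
  rewrite (bigD1 i) //= {1}/F eqxx; congr (_ * _).
  rewrite (eq_bigr (fun _ => #|T|%:R)) => [|j Hj]; last first.
    by rewrite /F (negbTE Hj) sumr_const.
  by rewrite prodr_const cardC1.
rewrite mulrC -L bigA_distr_bigA; apply: eq_bigr => f _.
rewrite (bigD1 i) //= /F eqxx big1 ?mulr1 //.
by move=> j Hj; rewrite (negbTE Hj).
Qed.

Lemma sum_pair1 (R : realType) (A B : finType) (f : A -> R) :
  \sum_(w : A * B) f w.1 = #|B|%:R * \sum_a f a.
Proof.
rewrite -(pair_big xpredT xpredT (fun a (b : B) => f a)) /= mulr_sumr.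
by apply: eq_bigr => a _; rewrite sumr_const mulr_natl.
Qed.

Lemma sum_pair2 (R : realType) (A B : finType) (g : B -> R) :
  \sum_(w : A * B) g w.2 = #|A|%:R * \sum_b g b.
Proof.
rewrite -(pair_big xpredT xpredT (fun (a : A) b => g b)) /=.
by rewrite sumr_const mulr_natl.
Qed.

Lemma card_set_sum (R : realType) (T : finType) (P : pred T) :
  #|[set x | P x]|%:R = \sum_x (P x)%:R :> R.
Proof.
rewrite -sum1_card natr_sum big_mkcond /=; apply: eq_bigr => x _.
by rewrite inE; case: (P x).
Qed.

Lemma rowbound (R : realType) N r (X : 'M[R]_(N, r)) (mu : R) :
  (0 < N)%N -> (0 < r)%N -> X^T *m X = 1%:M ->
  (forall i, N%:R / r%:R * \sum_k X i k ^+ 2 <= mu) ->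
  (forall i, \sum_k X i k ^+ 2 <= mu * r%:R / N%:R) /\ 1 <= mu.
Proof.
move=> N0 r0 HX H.
have N0' : 0 < N%:R :> R by rewrite ltr0n.
have r0' : 0 < r%:R :> R by rewrite ltr0n.
have Hb : forall i, \sum_k X i k ^+ 2 <= mu * r%:R / N%:R.
  move=> i; rewrite ler_pdivlMr //; have := H i.
  rewrite -(ler_pM2r r0') => Hi; apply: le_trans Hi.
  by rewrite le_eqVlt; apply/orP; left; apply/eqP; field; rewrite gt_eqF.
split=> //.
have Hs : \sum_i \sum_k X i k ^+ 2 = r%:R.
  have := congr1 mxtrace HX; rewrite mxtrace1 => <-.
  rewrite /mxtrace exchange_big; apply: eq_bigr => k _; rewrite !mxE.
  by apply: eq_bigr => i _; rewrite !mxE expr2.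
have : r%:R <= \sum_(i < N) (mu * r%:R / N%:R).
  rewrite -[X in X <= _]Hs; apply: ler_sum => i _; exact: Hb.
rewrite sumr_const card_ord -(mulr_natr (mu * r%:R / N%:R) N).
have -> : mu * r%:R / N%:R * N%:R = mu * r%:R by field; rewrite gt_eqF.
by rewrite -{1}(mul1r r%:R) ler_pM2r.
Qed.

Unset Implicit Arguments.

Theorem corollary1 (R : realType) (m n : nat) (M : 'M[R]_(m, n)) (r d s : nat)
  (delta mu : R) :
  (m <= n)%N -> \rank M = r -> (0 < r)%N -> 0 < delta < 1 ->
  incoherence M r mu ->
  7 * mu * r%:R * ln (2 * r%:R / delta) <= d%:R ->
  7 * mu * r%:R * ln (2 * r%:R * n%:R / delta) <= s%:R ->
  exists G : {set mcnus_omega m n d s},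
    (forall w, w \in G -> mcnus_success M r (fun _ => n%:R^-1) w) /\
    (1 - delta) * #|[set: mcnus_omega m n d s]|%:R <= #|G|%:R.
Proof.
move=> HmN HrM r0 /andP[del0 del1] Hinc Hd Hs.
have m0 : (0 < m)%N by apply: leq_trans r0 _; rewrite -HrM rank_leq_row.
have n0 : (0 < n)%N by apply: leq_trans HmN.
case: Hinc => U0 [S0 [V0 [Ub [Vb [HsM HfU HfV Hmu]]]]].
have [UbUb UbM] := svd_proj HsM HrM HfU.
have HsMt := is_svd_tr HsM.
have [VbVb VbMt] := svd_proj HsMt (etrans (mxrank_tr M) HrM) HfV.
have MV : M *m Vb *m Vb^T = M.
  by have := congr1 trmx VbMt; rewrite !trmx_mul !trmxK.
have [hU mu1] : (forall i, \sum_k Ub i k ^+ 2 <= mu * r%:R / m%:R) /\ 1 <= mu.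
  apply: rowbound => // i; rewrite Hmu le_max; apply/orP; left.
  exact: (le_bigmax 0 (fun i => m%:R / r%:R * \sum_(j < r) Ub i j ^+ 2) i).
have [hV _] : (forall i, \sum_k Vb i k ^+ 2 <= mu * r%:R / n%:R) /\ 1 <= mu.
  apply: rowbound => // i; rewrite Hmu le_max; apply/orP; right.
  exact: (le_bigmax 0 (fun i => n%:R / r%:R * \sum_(j < r) Vb i j ^+ 2) i).
have r1 : 1 <= r%:R :> R by rewrite ler1n.
have n1 : 1 <= n%:R :> R by rewrite ler1n.
have m0' : 0 < m%:R :> R by rewrite ltr0n.
have n0' : 0 < n%:R :> R by rewrite ltr0n.
set K := mu * r%:R.
have K1 : 1 <= K by rewrite /K; nra.
have K0 : 0 < K by apply: lt_le_trans K1; exact: ltr01.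
have eU : mu * r%:R / m%:R * m%:R = K by rewrite /K; field; rewrite gt_eqF.
have eV : mu * r%:R / n%:R * n%:R = K by rewrite /K; field; rewrite gt_eqF.
have cU : cnt s Ub 0 <= r%:R * ((1 - K^-1) ^+ s * m%:R ^+ s).
  have cpos : 0 < mu * r%:R / m%:R by rewrite divr_gt0.
  have c1 : 1 <= mu * r%:R / m%:R * m%:R by rewrite eU.
  have := count_bound UbUb hU cpos c1 s 0.
  by rewrite mxrank0 subn0 eU.
have cV : cnt d Vb 0 <= r%:R * ((1 - K^-1) ^+ d * n%:R ^+ d).
  have cpos : 0 < mu * r%:R / n%:R by rewrite divr_gt0.
  have c1 : 1 <= mu * r%:R / n%:R * n%:R by rewrite eV.
  have := count_bound VbVb hV cpos c1 d 0.
  by rewrite mxrank0 subn0 eV.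
have L1 : 1 < 2 * r%:R / delta by rewrite ltr_pdivlMr // mul1r; lra.
have rn1 : 1 <= r%:R * n%:R :> R by rewrite -natrM ler1n muln_gt0 r0 n0.
have L2 : 1 < 2 * r%:R * n%:R / delta by rewrite ltr_pdivlMr // mul1r -mulrA; lra.
have eV1 : (1 - K^-1) ^+ d <= (2 * r%:R / delta)^-1.
  by apply: exp_bound => //; [exact: ltW | rewrite /K mulrA].
have eU1 : (1 - K^-1) ^+ s <= (2 * r%:R * n%:R / delta)^-1.
  by apply: exp_bound => //; [exact: ltW | rewrite /K mulrA].
have d0 : (0 < d)%N.
  rewrite -(ltr0n R); apply: lt_le_trans Hd.
  have mu0 : 0 < mu by apply: lt_le_trans mu1; exact: ltr01.
  by rewrite !mulr_gt0 ?ln_gt0 ?ltr0n.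
pose b1 := fun cols : {ffun 'I_d -> 'I_n} => (\rank (rowsX Vb cols) < r)%N.
pose b2 := fun t : {ffun 'I_s -> 'I_m} => (\rank (rowsX Ub t) < r)%N.
exists [set w : mcnus_omega m n d s | ~~ b1 w.1 && [forall i, ~~ b2 (w.2 i)]].
split.
  move=> w; rewrite inE => /andP [H1 /forallP H2].
  apply: (success_det (Ub := Ub) (Vb := Vb)) => //.
    by apply/eqP; rewrite eqn_leq rank_leq_col leqNgt H1.
  by move=> i; apply/eqP; rewrite eqn_leq rank_leq_col leqNgt (H2 i).
rewrite [X in _ <= X]card_set_sum.
have pw : forall w : mcnus_omega m n d s,
    1 - (b1 w.1)%:R - \sum_i (b2 (w.2 i))%:R <= (~~ b1 w.1 && [forall i, ~~ b2 (w.2 i)])%:R :> R.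
  move=> w; case: (b1 w.1) => /=.
    by rewrite subrr sub0r oppr_le0 sumr_ge0.
  case: (boolP [forall i, ~~ b2 (w.2 i)]) => [/forallP H|].
    by rewrite subr0 big1 ?subr0 // => i _; rewrite (negbTE (H i)).
  rewrite negb_forall => /existsP [i]; rewrite negbK => Hi.
  rewrite subr0 subr_le0 (bigD1 i) //= Hi lerDl sumr_ge0 //.
apply: (le_trans _ (ler_sum _ (fun w _ => pw w))).
rewrite !sumrB sumr_const.
have cardO : #|[set: mcnus_omega m n d s]| = (n ^ d * (m ^ s) ^ n)%N.
  by rewrite cardsT card_prod !card_ffun !card_ord.
rewrite cardO -cardsT cardO.
rewrite (sum_pair1 _ (fun c : {ffun 'I_d -> 'I_n} => (b1 c)%:R : R)).
rewrite (sum_pair2 _ (fun O : {ffun 'I_n -> {ffun 'I_s -> 'I_m}} => \sum_i (b2 (O i))%:R : R)).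
rewrite exchange_big /=.
under [X in _ - _ * X]eq_bigr => i _ do rewrite (sum_ffun_coord i (fun t => (b2 t)%:R)).
rewrite sumr_const card_ord !card_ffun !card_ord.
have B1 : \sum_a (b1 a)%:R <= delta / 2 * n%:R ^+ d.
  have -> : \sum_a (b1 a)%:R = cnt d Vb 0.
    by rewrite /cnt; apply: eq_bigr => t _; rewrite adds0mx.
  apply: le_trans cV _.
  apply: le_trans (ler_wpM2l (ler0n _ r) (ler_wpM2r (exprn_ge0 _ (ltW n0')) eV1)) _.
  rewrite le_eqVlt; apply/orP; left; apply/eqP; field.
  by rewrite !gt_eqF ?ltr0n.
have B2 : \sum_x (b2 x)%:R <= delta / (2 * n%:R) * m%:R ^+ s.
  have -> : \sum_x (b2 x)%:R = cnt s Ub 0.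
    by rewrite /cnt; apply: eq_bigr => t _; rewrite adds0mx.
  apply: le_trans cU _.
  apply: le_trans (ler_wpM2l (ler0n _ r) (ler_wpM2r (exprn_ge0 _ (ltW m0')) eU1)) _.
  rewrite le_eqVlt; apply/orP; left; apply/eqP; field.
  by rewrite !gt_eqF ?ltr0n.
rewrite natrM !natrX.
set Nd := n%:R ^+ d.
set P := m%:R ^+ s.
have P0 : 0 <= P by rewrite exprn_ge0 // ltW.
have Nd0 : 0 <= Nd by rewrite exprn_ge0 // ltW.
have hP : P ^+ n = P ^+ n.-1 * P by rewrite -exprSr prednK.
have T1 : P ^+ n * \sum_a (b1 a)%:R <= P ^+ n * (delta / 2 * Nd).
  by apply: ler_wpM2l => //; rewrite exprn_ge0.
have T2 : Nd * ((P ^+ n.-1 * \sum_x (b2 x)%:R) *+ n) <= delta / 2 * (Nd * P ^+ n).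
  rewrite -(mulr_natr (P ^+ n.-1 * \sum_x (b2 x)%:R) n).
  apply: le_trans (_ : _ <= Nd * (P ^+ n.-1 * (delta / (2 * n%:R) * P) * n%:R)) _.
    apply: ler_wpM2l => //; apply: ler_wpM2r => //; apply: ler_wpM2l => //.
    by rewrite exprn_ge0.
  rewrite hP le_eqVlt; apply/orP; left; apply/eqP; field.
  by rewrite gt_eqF.
have X0 : 0 <= Nd * P ^+ n by rewrite mulr_ge0 // exprn_ge0.
lra.
Qed.
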